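(* Let $(X,\mathcal{M})$ be a measurable space and $K_x(dx')$ a probability kernel from $X$ to $X$. Define $S_K[f](x)=\int f(x')K_x(dx')$ for $f\in\mathcal{M}_b(X)$, $S^K[P]=\int K_x(\cdot)P(dx)$ for $P\in\mathcal{P}(X)$, and $\mathcal{P}_K(X)=\{P\in\mathcal{P}(X):S^K[P]=P\}$. Let $Q,P\in\mathcal{P}_K(X)$. (i) If $\Gamma\subset\mathcal{M}_b(X)$ with $S_K[\Gamma]\subset\Gamma$, then $D_f^\Gamma(Q\|P)=D_f^{S_K[\Gamma]}(Q\|P)$ and $W^\Gamma(Q,P)=W^{S_K[\Gamma]}(Q,P)$. (ii) If $\Gamma\subset\mathcal{M}_b(X)^2$ with $S_K[\Gamma]\subset\Gamma$ (componentwise) and the cost satisfies $S_K[c(\cdot,y)]=c(\cdot,y)$ and $S_K[c(x,\cdot)]=c(x,\cdot)$ for all $x,y\in X$, then $\mathcal{SD}^\Gamma_{c,\epsilon}(Q,P)=\mathcal{SD}^{S_K[\Gamma]}_{c,\epsilon}(Q,P)$. (iii) If moreover $S_K\circ S_K=S_K$ and $S_K[\Gamma]\subset\Gamma$, then $S_K[\Gamma]=\Gamma^{\mathrm{inv}}_K:=\{\gamma\in\Gamma:S_K[\gamma]=\gamma\}$.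
   Context: $f:[0,\infty)\to\mathbb{R}$ convex, lower semicontinuous, $f(1)=0$, strictly convex at $1$; $f^*$ its Legendre transform. $D_f^\Gamma(Q\|P)=\sup_{\gamma\in\Gamma}\{E_Q[\gamma]-\inf_{\nu\in\mathbb{R}}(\nu+E_P[f^*(\gamma-\nu)])\}$; $W^\Gamma(Q,P)=\sup_{\gamma\in\Gamma}\{E_Q[\gamma]-E_P[\gamma]\}$. For measurable cost $c:X\times X\to[0,\infty)$, $\epsilon>0$, $\Gamma$ a set of pairs: $W^\Gamma_{c,\epsilon}(Q,P)=\sup_{(\gamma_1,\gamma_2)\in\Gamma}\{E_P[\gamma_1]+E_Q[\gamma_2]-\epsilon E_{P\times Q}[\exp((\gamma_1(x)+\gamma_2(y)-c(x,y))/\epsilon)]+\epsilon\}$ and $\mathcal{SD}^\Gamma_{c,\epsilon}(Q,P)=W^\Gamma_{c,\epsilon}(Q,P)-\frac12W^\Gamma_{c,\epsilon}(Q,Q)-\frac12W^\Gamma_{c,\epsilon}(P,P)$. *)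

(* Defs.v *)
From mathcomp Require Import all_boot all_order all_algebra.
From mathcomp Require Import all_classical all_reals all_analysis.
Set Implicit Arguments. Unset Strict Implicit. Unset Printing Implicit Defensive.
Import Order.TTheory GRing.Theory Num.Theory.
Import numFieldNormedType.Exports.
Local Open Scope classical_set_scope.
Local Open Scope ring_scope.

Section Defs.
Context (R : realType).

(* Standing assumptions on f : [0,oo) -> R (values outside [0,oo) irrelevant). *)
Definition convex_on_nonneg (f : R -> R) :=
  forall x y t : R, 0 <= x -> 0 <= y -> 0 <= t <= 1 ->
    f (t * x + (1 - t) * y) <= t * f x + (1 - t) * f y.

Definition lsc_on_nonneg (f : R -> R) :=
  forall x : R, 0 <= x -> forall e : R, 0 < e ->
    exists2 delta : R, 0 < delta &
      forall y : R, 0 <= y -> `|y - x| < delta -> f x - e < f y.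

Definition strictly_convex_at_1 (f : R -> R) :=
  forall x y t : R, 0 <= x -> 0 <= y -> 0 < t < 1 -> x != y ->
    t * x + (1 - t) * y = 1 -> f 1 < t * f x + (1 - t) * f y.

Definition fdiv_admissible (f : R -> R) :=
  [/\ convex_on_nonneg f, lsc_on_nonneg f, f 1 = 0 & strictly_convex_at_1 f].

Definition legendre (f : R -> R) (y : R) : \bar R :=
  ereal_sup [set ((t * y - f t)%:E) | t in [set t : R | 0 <= t]].

Context (d : measure_display) (T : measurableType d).

Definition Mb : set (T -> R) :=
  [set g : T -> R | measurable_fun setT g /\ exists M : R, forall x, `|g x| <= M].

Definition Mb2 : set ((T -> R) * (T -> R)) := [set p | Mb p.1 /\ Mb p.2].

Definition SK (K : R.-pker T ~> T) (g : T -> R) : T -> R :=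
  fun x => fine (\int[K x]_y (g y)%:E)%E.

Definition SK2 (K : R.-pker T ~> T) (p : (T -> R) * (T -> R)) :=
  (SK K p.1, SK K p.2).

(* S_K[g] = g, for a possibly unbounded nonnegative g (integral in \bar R) *)
Definition SK_fixed (K : R.-pker T ~> T) (g : T -> R) :=
  forall x, (\int[K x]_y (g y)%:E)%E = (g x)%:E.

Definition stationary (K : R.-pker T ~> T) (P : probability T R) :=
  forall A : set T, measurable A -> (\int[P]_x K x A)%E = P A.

Local Open Scope ereal_scope.

Definition Df (f : R -> R) (G : set (T -> R)) (Q P : probability T R) : \bar R :=
  ereal_sup [set (\int[Q]_x (g x)%:E) -
      ereal_inf [set nu%:E + \int[P]_x legendre f (g x - nu) | nu in [set: R]]
    | g in G].

Definition IPM (G : set (T -> R)) (Q P : probability T R) : \bar R :=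
  ereal_sup [set (\int[Q]_x (g x)%:E) - (\int[P]_x (g x)%:E) | g in G].

Definition Wce (c : T * T -> R) (eps : R) (G : set ((T -> R) * (T -> R)))
    (Q P : probability T R) : \bar R :=
  ereal_sup [set (\int[P]_x (p.1 x)%:E) + (\int[Q]_y (p.2 y)%:E)
      - eps%:E * (\int[P \x Q]_z
           (expR ((p.1 z.1 + p.2 z.2 - c z) / eps))%:E) + eps%:E
    | p in G].

Definition SD (c : T * T -> R) (eps : R) (G : set ((T -> R) * (T -> R)))
    (Q P : probability T R) : \bar R :=
  Wce c eps G Q P - (2^-1)%:E * Wce c eps G Q Q - (2^-1)%:E * Wce c eps G P P.

End Defs.

(* Main.v *)
Require Import Defs.
From mathcomp Require Import all_boot all_order all_algebra.
From mathcomp Require Import all_classical all_reals all_analysis.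
From mathcomp Require Import measurable_realfun.
From mathcomp Require Import lra.
Set Implicit Arguments. Unset Strict Implicit. Unset Printing Implicit Defensive.
Import Order.TTheory GRing.Theory Num.Theory.
Import numFieldNormedType.Exports.
Local Open Scope classical_set_scope.
Local Open Scope ring_scope.


Section A.
Context {R : realType} {d : measure_display} {T : measurableType d}.
Local Open Scope ereal_scope.

Lemma int_cst1 (mu : {measure set T -> \bar R}) (mu1 : mu [set: T] = 1) (c : R) :
  \int[mu]_x (c%:E) = c%:E.
Proof. by rewrite integral_cst// mu1 mule1. Qed.

Lemma ge0_intB_cst (mu : {measure set T -> \bar R}) (mu1 : mu [set: T] = 1) (G : T -> \bar R) (c : R) :
  measurable_fun [set: T] G -> (forall x, 0 <= G x) ->
  \int[mu]_x (G x - c%:E) = \int[mu]_x G x - c%:E.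
Proof.
move=> mG G0.
set H := fun x => G x - c%:E.
have mH : measurable_fun [set: T] H by apply: emeasurable_funB.
have idt : forall x, H^\+ x + c%:E = G x + H^\- x.
  move=> x; rewrite /H funeposE funenegE.
  move: (G0 x); case: (G x) => [r| |] //= r0.
    rewrite -EFinB.
    have [rc|rc] := leP r c.
      rewrite (@max_r _ _ (r - c)%:E 0) ?lee_fin ?subr_le0 //.
      rewrite (@max_l _ _ (- (r - c))%:E 0) ?lee_fin ?oppr_ge0 ?subr_le0 //.
      by rewrite add0e -EFinD; congr (_%:E); rewrite opprB addrC subrK.
    rewrite (@max_l _ _ (r - c)%:E 0) ?lee_fin ?subr_ge0 ?(ltW rc) //.
    rewrite (@max_r _ _ (- (r - c))%:E 0) ?lee_fin ?oppr_le0 ?subr_ge0 ?(ltW rc) //.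
    by rewrite adde0 -EFinD subrK.
  rewrite addye // (_ : maxe -oo 0 = 0) ?addye //; exact/max_idPr/leNye.
have Hn : forall x, H^\- x <= `|c|%:E.
  move=> x; rewrite funenegE /H; rewrite ge_max; apply/andP; split; last by rewrite lee_fin.
  move: (G0 x); case: (G x) => [r| |] //= r0.
    by rewrite lee_fin opprB (le_trans _ (ler_norm c)) // lerBlDr lerDl -lee_fin.
  by rewrite leNye.
have mHp : measurable_fun [set: T] H^\+ by apply: measurable_funepos.
have mHn : measurable_fun [set: T] H^\- by apply: measurable_funeneg.
have E1 : \int[mu]_x (H^\+ x + c%:E) = \int[mu]_x (G x + H^\- x).
  by apply: eq_integral => x _; rewrite idt.
rewrite integralE.
have Hn0 : 0 <= \int[mu]_x H^\- x by apply: integral_ge0 => x _; exact: funeneg_ge0.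
have Hnf : \int[mu]_x H^\- x \is a fin_num.
  rewrite ge0_fin_numE //; apply: (@le_lt_trans _ _ (\int[mu]_x `|c|%:E)).
    by apply: ge0_le_integral => //.
  by rewrite (int_cst1 mu1) ltry.
have [c0|c0] := leP 0%R c.
  move: E1; rewrite ge0_integralD //.
  rewrite ge0_integralD //.
  rewrite (int_cst1 mu1) => E1.
  have -> : \int[mu]_x H^\+ x = \int[mu]_x G x + \int[mu]_x H^\- x - c%:E by rewrite -E1 addeK.
  by rewrite (addeAC (\int[mu]_x G x)) addeK.
have Hp : forall x, H^\+ x = G x + (- c)%:E.
  move=> x; rewrite funeposE /H; apply/max_idPl.
  by rewrite -EFinN adde_ge0 // lee_fin oppr_ge0 ltW.
have Hm : forall x, H^\- x = 0.
  move=> x; rewrite funenegE /H; apply/max_idPr.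
  by rewrite -EFinN oppe_le0 adde_ge0 // lee_fin oppr_ge0 ltW.
under eq_integral do rewrite Hp.
under [X in _ - X]eq_integral do rewrite Hm.
rewrite integral0 sube0 ge0_integralD //; last by move=> x _; rewrite lee_fin oppr_ge0 ltW.
by rewrite (int_cst1 mu1) EFinN.
Qed.
Lemma shiftE (mu : {measure set T -> \bar R}) (mu1 : mu [set: T] = 1)
  (F : T -> \bar R) (c : R) :
  measurable_fun [set: T] F -> (forall x, (- c)%:E <= F x) ->
  \int[mu]_x F x = \int[mu]_x (F x + c%:E) - c%:E.
Proof.
move=> mF Fc; rewrite -ge0_intB_cst //.
- by apply: eq_integral => x _; rewrite addeK.
- by apply: emeasurable_funD.
- move=> x; move: (Fc x); rewrite -[(-c)%:E]add0e EFinN => /(leeD2r (c%:E)).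
  by rewrite subeK.
Qed.

Lemma le_int_lb (mu : {measure set T -> \bar R}) (mu1 : mu [set: T] = 1)
  (F1 F2 : T -> \bar R) (c : R) :
  measurable_fun [set: T] F1 -> measurable_fun [set: T] F2 ->
  (forall x, (- c)%:E <= F1 x) -> (forall x, F1 x <= F2 x) ->
  \int[mu]_x F1 x <= \int[mu]_x F2 x.
Proof.
move=> m1 m2 c1 F12.
have c2 : forall x, (- c)%:E <= F2 x by move=> x; exact: le_trans (c1 x) (F12 x).
rewrite (shiftE mu1 m1 c1) (shiftE mu1 m2 c2); apply: leeB => //.
apply: ge0_le_integral => //.
- move=> x _; move: (c1 x); rewrite -[(-c)%:E]add0e EFinN => /(leeD2r (c%:E)).
  by rewrite subeK.
- by apply: emeasurable_funD.
- by apply: emeasurable_funD.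
- by move=> x _; apply: leeD2r.
Qed.
End A.


Section B.
Context {R : realType} {d : measure_display} {T : measurableType d}.
Variable K : R.-pker T ~> T.
Local Open Scope ereal_scope.

Lemma K1 x : K x [set: T] = 1. Proof. exact: prob_kernel. Qed.

Lemma mK_nn (F : T -> \bar R) : (forall x, 0 <= F x) -> measurable_fun [set: T] F ->
  measurable_fun [set: T] (fun x => \int[K x]_y F y).
Proof. by move=> F0 mF; apply: measurable_fun_integral_kernel => // U mU; exact: measurable_kernel. Qed.

Import HBNNSimple.

Lemma stat_indic (P : probability T R) (HP : stationary K P) E (mE : measurable E) :
  \int[P]_x (\int[K x]_y (\1_E y)%:E) = \int[P]_x (\1_E x)%:E.
Proof.
rewrite [RHS]integral_indic// setIT.
transitivity (\int[P]_x K x E); last exact: HP.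
by apply: eq_integral => x _; rewrite integral_indic// setIT.
Qed.

Lemma stat_nnsfun (P : probability T R) (HP : stationary K P) (f : {nnsfun T >-> R}) :
  \int[P]_x (\int[K x]_y (f y)%:E) = \int[P]_x (f x)%:E.
Proof.
under [in RHS]eq_integral do rewrite fimfunE -fsumEFin//.
rewrite [RHS]ge0_integral_fsum//; last 2 first.
  - by move=> r; exact/measurable_EFinP/measurableT_comp.
  - by move=> r z _; rewrite EFinM nnfun_muleindic_ge0.
under [in LHS]eq_integral.
  move=> y _.
  under eq_integral.
    by move=> z _; rewrite fimfunE -fsumEFin//; over.
  rewrite /= ge0_integral_fsum//; last 2 first.
    - by move=> r; exact/measurable_EFinP/measurableT_comp.
    - by move=> r z _; rewrite EFinM nnfun_muleindic_ge0.
  under eq_fsbigr.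
    move=> r _.
    rewrite (integralZl_indic _ (fun r => f @^-1` [set r]))//; last first.
      by move=> r0; rewrite preimage_nnfun0.
    rewrite integral_indic// setIT.
    over.
  over.
rewrite /= ge0_integral_fsum//; last 2 first.
  - move=> r; apply: measurable_funeM.
    exact: measurable_kernel.
  - move=> n y _.
    have := mulemu_ge0 (fun n => f @^-1` [set n]).
    by apply; exact: preimage_nnfun0.
apply: eq_fsbigr => r _.
rewrite (integralZl_indic _ (fun r => f @^-1` [set r]))//; last first.
  exact: preimage_nnfun0.
rewrite integral_indic// setIT.
transitivity (r%:E * \int[P]_x K x (f @^-1` [set r])); last by congr (_ * _); exact: HP.
have [r0|r0] := leP 0%R r.
  rewrite ge0_integralZl//.
  have mpre : measurable (f @^-1` [set r]) by rewrite -[X in measurable X]setTI; exact: measurable_funP.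
  exact: (measurable_kernel K _ mpre).
rewrite preimage_nnfun0//.
by rewrite !integral0_eq ?mule0 // => x _; rewrite measure0 ?mule0.
Qed.


Lemma stat_nn (P : probability T R) (HP : stationary K P) (F : T -> \bar R) :
  (forall x, 0 <= F x) -> measurable_fun [set: T] F ->
  \int[P]_x (\int[K x]_y F y) = \int[P]_x F x.
Proof.
move=> F0 mF.
pose f_ := nnsfun_approx measurableT mF.
have FE z : F z = lim ((f_ n z)%:E @[n --> \oo]).
  by apply/esym/cvg_lim => //=; exact: cvg_nnsfun_approx.
transitivity (\int[P]_x lim ((\int[K x]_y (f_ n y)%:E) @[n --> \oo])).
  apply: eq_integral => x _; rewrite -monotone_convergence//.
  - by apply: eq_integral => z _; rewrite FE.
  - by move=> n; exact/measurable_EFinP.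
  - by move=> n z _; rewrite lee_fin.
  - by move=> z _ a b ab; rewrite lee_fin; exact/lefP/nd_nnsfun_approx.
rewrite (monotone_convergence _ _ (g' := fun n x => \int[K x]_y (f_ n y)%:E))//; last 3 first.
  - move=> n; apply: mK_nn => //.
    + by move=> z; rewrite lee_fin.
    + exact/measurable_EFinP.
  - by move=> n y _; apply: integral_ge0 => // z _; rewrite lee_fin.
  - move=> y _ a b ab; apply: ge0_le_integral => //.
    + by move=> z _; rewrite lee_fin.
    + exact/measurable_EFinP.
    + exact/measurable_EFinP.
    + by move=> z _; rewrite lee_fin; exact/lefP/nd_nnsfun_approx.
under eq_fun do rewrite stat_nnsfun //.
rewrite -monotone_convergence//.
- by apply: eq_integral => z _; rewrite FE.
- by move=> n; exact/measurable_EFinP.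
- by move=> n z _; rewrite lee_fin.
- by move=> z _ a b ab; rewrite lee_fin; exact/lefP/nd_nnsfun_approx.
Qed.

Lemma lb_nn (a : \bar R) (c : R) : (- c)%:E <= a -> 0 <= a + c%:E.
Proof. by rewrite -[(-c)%:E]add0e EFinN => /(leeD2r (c%:E)); rewrite subeK. Qed.

Lemma stat_lb (P : probability T R) (HP : stationary K P) (F : T -> \bar R) (c : R) :
  measurable_fun [set: T] F -> (forall x, (- c)%:E <= F x) ->
  \int[P]_x (\int[K x]_y F y) = \int[P]_x F x.
Proof.
move=> mF Fc.
have mFc : measurable_fun [set: T] (fun x => F x + c%:E) by apply: emeasurable_funD.
have Fc0 : forall x, 0 <= F x + c%:E by move=> x; apply: lb_nn.
transitivity (\int[P]_x (\int[K x]_y (F y + c%:E) - c%:E)).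
  by apply: eq_integral => x _; rewrite (shiftE (K1 x) mF Fc).
rewrite (ge0_intB_cst (probability_setT P)); last 2 first.
  - by apply: mK_nn.
  - by move=> x; apply: integral_ge0 => y _.
by rewrite stat_nn // -(shiftE (probability_setT P) mF Fc).
Qed.

Lemma mK_lb (F : T -> \bar R) (c : R) :
  measurable_fun [set: T] F -> (forall x, (- c)%:E <= F x) ->
  measurable_fun [set: T] (fun x => \int[K x]_y F y).
Proof.
move=> mF Fc.
have -> : (fun x => \int[K x]_y F y) = (fun x => \int[K x]_y (F y + c%:E) - c%:E).
  by apply/funext => x; rewrite (shiftE (K1 x) mF Fc).
apply: emeasurable_funB => //; apply: mK_nn.
  by move=> y; apply: lb_nn.
by apply: emeasurable_funD.
Qed.

Lemma int_lb (mu : {measure set T -> \bar R}) (mu1 : mu [set: T] = 1)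
  (F : T -> \bar R) (c : R) :
  measurable_fun [set: T] F -> (forall x, (- c)%:E <= F x) ->
  (- c)%:E <= \int[mu]_x F x.
Proof.
move=> mF Fc; rewrite -(int_cst1 mu1 (- c)); apply: (le_int_lb mu1 (c := c)) => //.
Qed.

End B.


Section C.
Context {R : realType} {d : measure_display} {T : measurableType d}.
Variable K : R.-pker T ~> T.
Local Open Scope ereal_scope.

Lemma bnd_lb (g : T -> R) (M : R) : (forall x, `|g x| <= M)%R ->
  forall x, (- M)%:E <= (g x)%:E.
Proof. by move=> gM x; rewrite lee_fin; move: (gM x); rewrite ler_norml => /andP[]. Qed.

Lemma bnd_int (mu : {measure set T -> \bar R}) (mu1 : mu [set: T] = 1)
  (g : T -> R) (M : R) : measurable_fun [set: T] g -> (forall x, `|g x| <= M)%R ->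
  mu.-integrable [set: T] (EFin \o g).
Proof.
move=> mg gM; apply: measurable_bounded_integrable => //.
  by rewrite mu1 ltry.
exists M; split; first exact: num_real.
by move=> r Mr y _ /=; rewrite (le_trans (gM y)) // ltW.
Qed.

Lemma Kint_fin (g : T -> R) (M : R) : measurable_fun [set: T] g ->
  (forall x, `|g x| <= M)%R ->
  forall x, \int[K x]_y (g y)%:E = (SK K g x)%:E.
Proof.
move=> mg gM x; rewrite /SK fineK //; apply: integrable_fin_num => //.
exact: (bnd_int (K1 K x) mg gM).
Qed.

Lemma mSK (g : T -> R) (M : R) : measurable_fun [set: T] g ->
  (forall x, `|g x| <= M)%R -> measurable_fun [set: T] (SK K g).
Proof.
move=> mg gM.
have mgE : measurable_fun [set: T] (EFin \o g) by exact/measurable_EFinP.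
have -> : SK K g = fine \o (fun x => \int[K x]_y ((g y)%:E + M%:E) - M%:E).
  apply/funext => x; rewrite /SK /=.
  by rewrite (shiftE (K1 K x) mgE (bnd_lb gM)).
apply: measurableT_comp => //; apply: emeasurable_funB => //.
apply: mK_nn; last by apply: emeasurable_funD.
by move=> y; apply: lb_nn; exact: bnd_lb gM y.
Qed.

Lemma statR (P : probability T R) (HP : stationary K P) (g : T -> R) (M : R) :
  measurable_fun [set: T] g -> (forall x, `|g x| <= M)%R ->
  \int[P]_x (SK K g x)%:E = \int[P]_x (g x)%:E.
Proof.
move=> mg gM.
have mgE : measurable_fun [set: T] (EFin \o g) by exact/measurable_EFinP.
under eq_integral do rewrite -(Kint_fin mg gM).
exact: (stat_lb HP mgE (bnd_lb gM)).
Qed.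

End C.


Section D0.
Context {R : realType}.
Local Open Scope ereal_scope.
Variable f : R -> R.

Lemma leg_lb y : (- f 0)%:E <= legendre f y.
Proof.
apply: ereal_sup_ubound; exists 0%R => //=.
by rewrite mul0r add0r.
Qed.

Lemma leg_ub t y : (0 <= t)%R -> (t * y - f t)%:E <= legendre f y.
Proof. by move=> t0; apply: ereal_sup_ubound; exists t. Qed.

Lemma leg_nd : {homo legendre f : x y / (x <= y)%R >-> x <= y}.
Proof.
move=> x y xy; apply: ge_ereal_sup => _ [t /= t0 <-].
apply: le_trans (leg_ub y t0); rewrite lee_fin lerD2r.
by rewrite ler_wpM2l.
Qed.

Lemma leg_meas : measurable_fun [set: R] (legendre f).
Proof.
apply: (measurability _ (ErealGenOInfty.measurableE R)) => //.
move=> /= _ [_ [a ->] <-]; apply: measurableI => //; apply: is_interval_measurable.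
move=> s t /= Fs Ft u /andP[su ut].
move: Fs; rewrite /= !in_itv /= !andbT => Fs.
exact: lt_le_trans Fs (leg_nd su).
Qed.

End D0.


Section D1.
Context {R : realType} {d : measure_display} {T : measurableType d}.
Variable f : R -> R.
Local Open Scope ereal_scope.

Lemma leg_jensen (mu : {measure set T -> \bar R}) (mu1 : mu [set: T] = 1)
  (h : T -> R) (M : R) : measurable_fun [set: T] h -> (forall x, `|h x| <= M)%R ->
  legendre f (fine (\int[mu]_y (h y)%:E)) <= \int[mu]_y legendre f (h y).
Proof.
move=> mh hM.
apply: ge_ereal_sup => _ [t /= t0 <-].
have ih := bnd_int mu1 mh hM.
have hfin : \int[mu]_y (h y)%:E = (fine (\int[mu]_y (h y)%:E))%:E.
  by rewrite fineK // integrable_fin_num.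
set m := fine _ in hfin *.
have mth : measurable_fun [set: T] (fun y => t * h y)%R.
  by apply: measurable_funM.
have thM : forall y, (`|t * h y| <= `|t| * M)%R.
  by move=> y; rewrite normrM ler_wpM2l.
have fM : forall y : T, (`|cst (f t) y| <= `|f t|)%R by move=> y.
have E : (t * m - f t)%:E = \int[mu]_y ((t * h y - f t)%:E).
  have i1 := bnd_int mu1 mth thM.
  have i2 := bnd_int mu1 (measurable_cst (f t)) fM.
  rewrite (@integralB_EFin _ _ _ mu setT (fun y => t * h y)%R (cst (f t))) //.
  rewrite (int_cst1 mu1).
  under eq_integral do rewrite EFinM.
  by rewrite integralZl // hfin EFinB EFinM.
rewrite E; apply: (le_int_lb mu1 (c := `|t| * M + `|f t| + `|f 0|)%R).
- apply/measurable_EFinP; apply: measurable_funB => //.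
- exact: measurableT_comp (leg_meas f) mh.
- move=> y; rewrite lee_fin.
  have h1 := thM y.
  have h2 : (- `|t * h y| <= t * h y)%R by rewrite lerNl -normrN ler_norm.
  have h3 : (f t <= `|f t|)%R by exact: ler_norm.
  have h4 : (0 <= `|f 0|)%R by exact: normr_ge0.
  lra.
- by move=> y; apply: leg_ub.
Qed.

End D1.

Section D2.
Context {R : realType} {d : measure_display} {T : measurableType d}.
Variable f : R -> R.
Variable K : R.-pker T ~> T.
Local Open Scope ereal_scope.

Lemma leg_lb' y : (- `|f 0|)%:E <= legendre f y.
Proof.
apply: le_trans (leg_lb f y); rewrite lee_fin lerN2; exact: ler_norm.
Qed.

Lemma SK_sub (g : T -> R) (M : R) (nu : R) : measurable_fun [set: T] g ->
  (forall x, `|g x| <= M)%R ->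
  forall x, (SK K g x - nu)%R = fine (\int[K x]_y (g y - nu)%:E).
Proof.
move=> mg gM x.
have mh : measurable_fun [set: T] (fun y => g y - nu)%R by apply: measurable_funB.
under eq_integral do rewrite EFinB.
have i1 := bnd_int (K1 K x) mg gM.
have cM : forall y : T, (`|cst nu y| <= `|nu|)%R by [].
have i2 := bnd_int (K1 K x) (measurable_cst nu) cM.
rewrite (@integralB_EFin _ _ _ (K x) setT g (cst nu)) //.
by rewrite (int_cst1 (K1 K x)) (Kint_fin K mg gM x).
Qed.

Lemma LJ (P : probability T R) (HP : stationary K P) (g : T -> R) (M : R) (nu : R) :
  measurable_fun [set: T] g -> (forall x, `|g x| <= M)%R ->
  \int[P]_x legendre f (SK K g x - nu) <= \int[P]_x legendre f (g x - nu).
Proof.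
move=> mg gM.
set h := fun y => (g y - nu)%R.
have mh : measurable_fun [set: T] h by apply: measurable_funB.
have hM : forall y, (`|h y| <= M + `|nu|)%R.
  by move=> y; rewrite /h (le_trans (ler_normB _ _)) // lerD2r.
have mS := mSK K mg gM.
have mL : measurable_fun [set: T] (fun y => legendre f (h y)).
  exact: measurableT_comp (leg_meas f) mh.
have lbL : forall y, (- `|f 0|)%:E <= legendre f (h y) by move=> y; exact: leg_lb'.
rewrite -(stat_lb HP mL lbL).
apply: (le_int_lb (probability_setT P) (c := `|f 0|)).
- apply: measurableT_comp (leg_meas f) _.
  by apply: measurable_funB.
- exact: (mK_lb K mL lbL).
- by move=> x; apply: leg_lb'.
- move=> x; rewrite (SK_sub nu mg gM x).
  have J := @leg_jensen R d T f (K x) (K1 K x) h _ mh hM; exact: J.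
Qed.

End D2.


Section E.
Context {R : realType} {d : measure_display} {T : measurableType d}.
Local Open Scope ereal_scope.

Lemma int_lin (mu : {measure set T -> \bar R}) (mu1 : mu [set: T] = 1)
  (a : T -> R) (Ma : R) (cc : T -> R) (cv b eps : R) :
  measurable_fun [set: T] a -> (forall x, `|a x| <= Ma)%R ->
  measurable_fun [set: T] cc -> (forall x, (0 <= cc x)%R) ->
  \int[mu]_y (cc y)%:E = cv%:E ->
  mu.-integrable [set: T] (fun y => ((a y + b - cc y) / eps)%:E) /\
  \int[mu]_y ((a y + b - cc y) / eps)%:E =
    ((fine (\int[mu]_y (a y)%:E) + b - cv) / eps)%:E.
Proof.
move=> ma aM mc c0 cfin.
have ia := bnd_int mu1 ma aM.
have bM : forall y : T, (`|cst b y| <= `|b|)%R by [].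
have ib := bnd_int mu1 (measurable_cst b) bM.
have ic : mu.-integrable [set: T] (EFin \o cc).
  apply/integrableP; split; first exact/measurable_EFinP.
  under eq_integral do rewrite /= ger0_norm //.
  by rewrite cfin ltry.
have afin : \int[mu]_y (a y)%:E = (fine (\int[mu]_y (a y)%:E))%:E.
  by rewrite fineK // integrable_fin_num.
have iab := integrableD measurableT ia ib.
have iabc := integrableB measurableT iab ic.
have ih := integrableZr measurableT (eps^-1) iabc.
have eh : (fun y => ((a y + b - cc y) / eps)%:E) =
   (fun y => (((EFin \o a) \+ (EFin \o cst b)) y - (EFin \o cc) y) * (eps^-1)%:E).
  by apply/funext => y /=; rewrite EFinM EFinB EFinD.
rewrite eh; split; first exact: ih.
rewrite integralZr // integralB // integralD // (int_cst1 mu1) cfin.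
have -> : \int[mu]_x (EFin \o a) x = (fine (\int[mu]_y (a y)%:E))%:E by exact: afin.
by rewrite [RHS]EFinM EFinB EFinD.
Qed.

Lemma exp_jensen (mu : {measure set T -> \bar R}) (mu1 : mu [set: T] = 1)
  (h : T -> R) (B : R) :
  mu.-integrable [set: T] (fun y => (h y)%:E) -> measurable_fun [set: T] h ->
  (forall y, h y <= B)%R ->
  (expR (fine (\int[mu]_y (h y)%:E)))%:E <= \int[mu]_y (expR (h y))%:E.
Proof.
move=> ih mh hB.
have hfin : \int[mu]_y (h y)%:E = (fine (\int[mu]_y (h y)%:E))%:E.
  by rewrite fineK // integrable_fin_num.
set m := fine _ in hfin *.
have me : measurable_fun [set: T] (fun y => expR (h y)).
  exact: measurableT_comp (@measurable_expR R) mh.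
have eB : forall y, (`|expR (h y)| <= expR B)%R.
  by move=> y; rewrite ger0_norm ?expR_ge0 // ler_expR.
have ie := bnd_int mu1 me eB.
have cM : forall y : T, (`|cst (1 - m) y| <= `|1 - m|)%R by [].
have ic := bnd_int mu1 (measurable_cst (1 - m)%R) cM.
have ihc := integrableD measurableT ih ic.
have ilin := integrableZl measurableT (expR m) ihc.
have E : (expR m)%:E = \int[mu]_x ((expR m)%:E * ((h x)%:E + (EFin \o cst (1 - m)%R) x)).
  rewrite (integralZl measurableT ihc) integralD // hfin.
  have -> : \int[mu]_x (EFin \o cst (1 - m)%R) x = (1 - m)%:E by exact: (int_cst1 mu1).
  by rewrite -EFinD addrC subrK mule1.
rewrite E; apply: le_integral => // x _.
rewrite /= -EFinD -EFinM lee_fin.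
have -> : expR (h x) = (expR m * expR (h x - m))%R by rewrite -expRD addrC subrK.
rewrite ler_wpM2l ?expR_ge0 //.
apply: le_trans (expR_ge1Dx _); lra.
Qed.

Lemma mexpf (eps : R) (a cc : T -> R) (b : R) :
  measurable_fun [set: T] a -> measurable_fun [set: T] cc ->
  measurable_fun [set: T] (fun x => (expR ((a x + b - cc x) / eps))%:E).
Proof.
move=> ma mc; apply/measurable_EFinP; apply: measurableT_comp => //.
apply: measurable_funM => //; apply: measurable_funB => //.
by apply: measurable_funD.
Qed.

Variable K : R.-pker T ~> T.

Lemma WJ (P : probability T R) (HP : stationary K P) (eps : R) (a : T -> R) (Ma : R)
  (b : R) (cc : T -> R) : (0 < eps)%R ->
  measurable_fun [set: T] a -> (forall x, `|a x| <= Ma)%R ->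
  measurable_fun [set: T] cc -> (forall x, 0 <= cc x)%R -> SK_fixed K cc ->
  \int[P]_x (expR ((SK K a x + b - cc x) / eps))%:E <=
  \int[P]_x (expR ((a x + b - cc x) / eps))%:E.
Proof.
move=> eps0 ma aM mc c0 cfix.
have mphi := mexpf eps b ma mc.
have phi0 : forall x, 0 <= (expR ((a x + b - cc x) / eps))%:E.
  by move=> x; rewrite lee_fin expR_ge0.
rewrite -(stat_nn HP phi0 mphi).
apply: ge0_le_integral => //.
- by have HH := mexpf eps b (mSK K ma aM) mc.
- by have HH := mK_nn K phi0 mphi.
move=> x _.
have [ih iE] := int_lin (K1 K x) b eps ma aM mc c0 (cfix x).
have mh : measurable_fun [set: T] (fun y => (a y + b - cc y) / eps)%R.
  apply: measurable_funM => //; apply: measurable_funB => //.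
  by apply: measurable_funD.
have hB : forall y, ((a y + b - cc y) / eps <= (Ma + b) / eps)%R.
  move=> y; apply: ler_wpM2r; first by rewrite invr_ge0 ltW.
  have h1 : (a y <= Ma)%R by apply: le_trans (aM y); exact: ler_norm.
  have h2 := c0 y.
  lra.
have J := exp_jensen (K1 K x) ih mh hB.
by move: J; rewrite iE.
Qed.

End E.


Section F.
Context {R : realType} {d : measure_display} {T : measurableType d}.
Variable K : R.-pker T ~> T.
Local Open Scope ereal_scope.

Variables (c : T * T -> R) (eps : R).
Hypotheses (eps0 : (0 < eps)%R) (mc : measurable_fun [set: T * T] c)
  (c0 : forall z, (0 <= c z)%R)
  (cfix1 : forall y, SK_fixed K (fun x => c (x, y)))
  (cfix2 : forall x, SK_fixed K (fun y => c (x, y))).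

Definition Eexp (A B : T -> R) (z : T * T) := (expR ((A z.1 + B z.2 - c z) / eps))%:E.

Lemma mEexp A B : measurable_fun [set: T] A -> measurable_fun [set: T] B ->
  measurable_fun [set: T * T] (Eexp A B).
Proof.
move=> mA mB; apply/measurable_EFinP; apply: measurableT_comp => //.
apply: measurable_funM => //; apply: measurable_funB => //.
apply: measurable_funD.
- exact: measurableT_comp mA measurable_fst.
- exact: measurableT_comp mB measurable_snd.
Qed.

Lemma Eexp0 A B z : 0 <= Eexp A B z.
Proof. by rewrite lee_fin expR_ge0. Qed.

Lemma mc1 y : measurable_fun [set: T] (fun x => c (x, y)).
Proof. exact: measurableT_comp mc (pair2_measurable y). Qed.

Lemma mc2 x : measurable_fun [set: T] (fun y => c (x, y)).
Proof. exact: measurableT_comp mc (pair1_measurable x). Qed.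

Lemma prod_le (P Q : probability T R) (HP : stationary K P) (HQ : stationary K Q)
  (p1 p2 : T -> R) (M1 M2 : R) :
  measurable_fun [set: T] p1 -> (forall x, `|p1 x| <= M1)%R ->
  measurable_fun [set: T] p2 -> (forall x, `|p2 x| <= M2)%R ->
  \int[P \x Q]_z Eexp (SK K p1) (SK K p2) z <= \int[P \x Q]_z Eexp p1 p2 z.
Proof.
move=> m1 b1 m2 b2.
have ms1 := mSK K m1 b1.
have ms2 := mSK K m2 b2.
rewrite (fubini_tonelli2 _ (mEexp ms1 ms2) (@Eexp0 _ _)).
apply: (@le_trans _ _ (\int[Q]_y fubini_G P (Eexp p1 (SK K p2)) y)).
  apply: ge0_le_integral => //.
  - by move=> y _; apply: integral_ge0 => x _; exact: Eexp0.
  - exact: measurable_fun_fubini_tonelli_G (mEexp ms1 ms2) (@Eexp0 _ _).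
  - exact: measurable_fun_fubini_tonelli_G (mEexp m1 ms2) (@Eexp0 _ _).
  move=> y _; rewrite /fubini_G /Eexp /=.
  exact: (WJ HP (SK K p2 y) eps0 m1 b1 (mc1 y) (fun x => c0 (x, y)) (cfix1 y)).
rewrite -(fubini_tonelli2 _ (mEexp m1 ms2) (@Eexp0 _ _)).
rewrite (fubini_tonelli1 _ (mEexp m1 ms2) (@Eexp0 _ _)).
rewrite (fubini_tonelli1 _ (mEexp m1 m2) (@Eexp0 _ _)).
apply: ge0_le_integral => //.
- by move=> x _; apply: integral_ge0 => y _; exact: Eexp0.
- exact: measurable_fun_fubini_tonelli_F (mEexp m1 ms2) (@Eexp0 _ _).
- exact: measurable_fun_fubini_tonelli_F (mEexp m1 m2) (@Eexp0 _ _).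
move=> x _; rewrite /fubini_F /Eexp /=.
under eq_integral do rewrite (addrC (p1 x)).
under [X in _ <= X]eq_integral do rewrite (addrC (p1 x)).
exact: (WJ HQ (p1 x) eps0 m2 b2 (mc2 x) (fun y => c0 (x, y)) (cfix2 x)).
Qed.

End F.


Section G.
Context {R : realType}.
Local Open Scope ereal_scope.

Lemma sup_eq_img {A : Type} (G : set A) (S : A -> A) (V : A -> \bar R) :
  S @` G `<=` G -> (forall g, G g -> V g <= V (S g)) ->
  ereal_sup [set V g | g in G] = ereal_sup [set V g | g in S @` G].
Proof.
move=> HS HV; apply/eqP; rewrite eq_le; apply/andP; split.
- apply: ge_ereal_sup => _ [g Gg <-]; apply: le_trans (HV g Gg) _.
  by apply: ereal_sup_ubound; exists (S g) => //; exists g.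
- by apply: ereal_sup_le => _ [g Sg <-]; exists g => //; exact: HS.
Qed.

End G.

Theorem theorem3 (R : realType) (d : measure_display) (T : measurableType d)
    (K : R.-pker T ~> T) (Q P : probability T R)
    (HQ : stationary K Q) (HP : stationary K P) :
  (* (i) *)
  (forall f : R -> R, fdiv_admissible f ->
   forall G : set (T -> R), G `<=` (@Mb R _ T) -> SK K @` G `<=` G ->
     Df f G Q P = Df f (SK K @` G) Q P) /\
  (forall G : set (T -> R), G `<=` (@Mb R _ T) -> SK K @` G `<=` G ->
     IPM G Q P = IPM (SK K @` G) Q P) /\
  (* (ii) *)
  (forall (c : T * T -> R) (eps : R), 0 < eps ->
   measurable_fun setT c -> (forall z, 0 <= c z) ->
   (forall y, SK_fixed K (fun x => c (x, y))) ->
   (forall x, SK_fixed K (fun y => c (x, y))) ->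
   forall G : set ((T -> R) * (T -> R)), G `<=` (@Mb2 R _ T) -> SK2 K @` G `<=` G ->
     SD c eps G Q P = SD c eps (SK2 K @` G) Q P) /\
  (* (iii) *)
  (forall G : set (T -> R), G `<=` (@Mb R _ T) ->
   (forall g : T -> R, (@Mb R _ T) g -> SK K (SK K g) = SK K g) -> SK K @` G `<=` G ->
     SK K @` G = [set g | G g /\ SK K g = g]) /\
  (forall G : set ((T -> R) * (T -> R)), G `<=` (@Mb2 R _ T) ->
   (forall g : T -> R, (@Mb R _ T) g -> SK K (SK K g) = SK K g) -> SK2 K @` G `<=` G ->
     SK2 K @` G = [set p | G p /\ SK2 K p = p]).
Proof.
split.
  move=> f _ G HG HS; rewrite /Df; apply: sup_eq_img => // g Gg.
  have [mg [M gM]] := HG g Gg.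
  rewrite (statR HQ mg gM); apply: leeB => //.
  apply: le_ereal_inf_tmp => _ [nu _ <-].
  apply: le_trans (ereal_inf_lbound _) _; first by exists nu.
  apply: leeD2l; exact: (LJ f HP nu mg gM).
split.
  move=> G HG HS; rewrite /IPM; apply: sup_eq_img => // g Gg.
  have [mg [M gM]] := HG g Gg.
  by rewrite (statR HQ mg gM) (statR HP mg gM).
split.
  move=> c eps eps0 mc c0 cf1 cf2 G HG HS.
  have Weq : forall (P1 P2 : probability T R), stationary K P1 -> stationary K P2 ->
      Wce c eps G P2 P1 = Wce c eps (SK2 K @` G) P2 P1.
    move=> P1 P2 H1 H2; rewrite /Wce; apply: sup_eq_img => // p Gp.
    have [[m1 [M1 b1]] [m2 [M2 b2]]] := HG p Gp.
    rewrite /SK2 /= (statR H1 m1 b1) (statR H2 m2 b2).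
    apply: leeD2r; apply: leeB => //; apply: lee_wpmul2l; first by rewrite lee_fin ltW.
    exact: (prod_le eps0 mc c0 cf1 cf2 H1 H2 m1 b1 m2 b2).
  by rewrite /SD !Weq.
split.
  move=> G HG idem HS; apply/seteqP; split.
  - move=> _ [h Gh <-]; split; first by apply: HS; exists h.
    exact: idem (HG h Gh).
  - by move=> g [Gg Sg]; exists g.
move=> G HG idem HS; apply/seteqP; split.
- move=> _ [p Gp <-]; split; first by apply: HS; exists p.
  have [H1 H2] := HG p Gp.
  by rewrite /SK2 /= (idem _ H1) (idem _ H2).
- by move=> p [Gp Sp]; exists p.
Qed.
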